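(* In the setting of the context, let $X^{m,s}$ be a diffusion and suppose $u_{m,s}(x,\theta)$ is strictly supermodular and twice continuously differentiable. If $\psi_{m,s}$ is $u_{m,s}$-subdifferentiable, then the indifference index $\theta^*$ satisfies, at $x\in\mathrm{int}(I^m)$ (where $\psi_{m,s}$ is differentiable), $\psi_{m,s}'(x)=\frac{\partial}{\partial x}u_{m,s}(x,\theta^*(x))$. Moreover, $\theta^*$ is non-decreasing.
   Context: Fix $\rho>0$, an interval $\Theta$, a starting point $X_0$, a terminal reward $G(x,\theta)$ and a running reward $c(x)$. For a speed measure $m$ and a strictly increasing continuous scale function $s$, $X^{m,s}$ denotes the regular one-dimensional generalised diffusion with speed measure $m$ and scale $s$ on its state space $I^m$ started at $X_0$ (either both endpoints non-reflecting, or started at a reflecting endpoint with the other non-reflecting); $\mathrm{int}(I^m)$ is the interior plus accessible boundary points. $\varphi_{m,s}$ is the increasing positive solution of $\frac12\frac{d}{dm}\frac{d}{ds}f=\rho f$ with $\varphi_{m,s}(X_0)=1$, $\psi_{m,s}=\log\varphi_{m,s}$, $R_{m,s}(x)=\mathbb{E}_x[\int_0^\infty e^{-\rho t}c(X^{m,s}_t)dt]$, and $u_{m,s}(x,\theta)=\log(G(x,\theta)-R_{m,s}(x))$. For $f$ defined on $A$ and $u:A\times B\to\mathbb{R}$, the $u$-subdifferential of $f$ at $y$ is $\partial^uf(y)=\{z\in B:u(y,z)-f(y)\ge u(\hat y,z)-f(\hat y)\ \forall\hat y\in A\}$, and $f$ is $u$-subdifferentiable if $\partial^uf(y)\neq\emptyset$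 for all $y\in A$; here $A=\mathrm{int}(I^m)$, $B=\Theta$. Strict supermodularity of $u$: $u(y',z)-u(y,z)$ strictly increasing in $z$ for $y'>y$. The indifference index $\theta^*(x)$ is a parameter $\theta$ for which it is optimal to stop immediately when the diffusion starts at $x$, i.e. $\theta^*(x)\in\partial^{u_{m,s}}\psi_{m,s}(x)$ (so that $x$ maximises $x'\mapsto u_{m,s}(x',\theta)-\psi_{m,s}(x')$). *)

(* Defs.v *)
From Stdlib Require Import Reals.
From Coquelicot Require Import Coquelicot.
Open Scope R_scope.

Definition is_interval (A : R -> Prop) : Prop :=
  forall x y z, A x -> A z -> x <= y <= z -> A y.

Definition u_subdiff (A B : R -> Prop) (u : R -> R -> R) (f : R -> R)
  (y z : R) : Prop :=
  B z /\ forall yh, A yh -> u y z - f y >= u yh z - f yh.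

Definition u_subdifferentiable (A B : R -> Prop) (u : R -> R -> R) (f : R -> R)
  : Prop :=
  forall y, A y -> exists z, u_subdiff A B u f y z.

Definition strictly_supermodular (A B : R -> Prop) (u : R -> R -> R) : Prop :=
  forall y y', A y -> A y' -> y < y' ->
  forall z z', B z -> B z' -> z < z' ->
    u y' z - u y z < u y' z' - u y z'.

Definition cont2 (f : R -> R -> R) (x t : R) : Prop :=
  continuous (fun p : R * R => f (fst p) (snd p)) (x, t).

Definition C2_on (A B : R -> Prop) (u : R -> R -> R) : Prop :=
  exists ux ut uxx uxt utx utt : R -> R -> R,
  forall x t, A x -> B t ->
    is_derive (fun y => u y t) x (ux x t) /\
    is_derive (fun s => u x s) t (ut x t) /\
    is_derive (fun y => ux y t) x (uxx x t) /\
    is_derive (fun s => ux x s) t (uxt x t) /\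
    is_derive (fun y => ut y t) x (utx x t) /\
    is_derive (fun s => ut x s) t (utt x t) /\
    cont2 u x t /\ cont2 ux x t /\ cont2 ut x t /\
    cont2 uxx x t /\ cont2 uxt x t /\ cont2 utx x t /\ cont2 utt x t.

(* Main.v *)
Require Import Defs.
From Stdlib Require Import Reals Lra.
From Coquelicot Require Import Coquelicot.
Open Scope R_scope.

Theorem corollary4p8
  (A Th : R -> Prop) (psi : R -> R) (u : R -> R -> R) (theta_star : R -> R) :
  is_interval A -> is_interval Th ->
  strictly_supermodular A Th u ->
  C2_on A Th u ->
  u_subdifferentiable A Th u psi ->
  (forall x, A x -> u_subdiff A Th u psi x (theta_star x)) ->
  (forall x, locally x A -> ex_derive psi x ->
     Derive psi x = Derive (fun y => u y (theta_star x)) x)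
  /\
  (forall x y, A x -> A y -> x <= y -> theta_star x <= theta_star y).
Proof.
  intros HA HTh Hsm [ux [ut [uxx [uxt [utx [utt HC]]]]]] _ Hts. split.
  - intros x Hl Hd.
    assert (Ax : A x) by exact (locally_singleton _ _ Hl).
    destruct (Hts x Ax) as [Tx Hmax].
    set (t := theta_star x) in *.
    destruct (HC x t Ax Tx) as [Hu _].
    set (g := fun y => u y t - psi y).
    assert (Hg : is_derive g x (ux x t - Derive psi x)).
    { unfold g. apply (is_derive_minus (fun y => u y t) psi). exact Hu. apply Derive_correct; exact Hd. }
    assert (Hgr := proj1 (is_derive_Reals _ _ _) Hg).
    assert (pr : derivable_pt g x) by (exists (ux x t - Derive psi x); exact Hgr).
    destruct Hl as [eps Heps].
    assert (H0 := deriv_maximum g (x - eps) (x + eps) x pr).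
    rewrite (derive_pt_eq_0 g x _ pr Hgr) in H0.
    assert (Hz : ux x t - Derive psi x = 0).
    { apply H0; try (destruct eps; simpl; lra).
      intros y H1 H2. unfold g.
      assert (Ay : A y).
      { apply Heps. unfold ball; simpl; unfold AbsRing_ball, abs, minus, plus, opp; simpl.
        apply Rabs_def1; lra. }
      specialize (Hmax y Ay). lra. }
    change (Derive psi x = Derive (fun y => u y t) x). assert (E := is_derive_unique (fun y => u y t) x _ Hu). simpl in E |- *. rewrite E. lra.
  - intros x y Ax Ay Hxy.
    destruct (Rle_or_lt (theta_star x) (theta_star y)) as [H|H]; [exact H|].
    destruct Hxy as [Hxy|Hxy]; [|subst; lra].
    destruct (Hts x Ax) as [Tx Hx]. destruct (Hts y Ay) as [Ty Hy].
    specialize (Hx y Ay). specialize (Hy x Ax).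
    specialize (Hsm x y Ax Ay Hxy _ _ Ty Tx H). lra.
Qed.
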